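(* Let $N\ge2$, $d\ge1$, let $S\subset\mathbb{Z}_N^d$ be a nonempty Salem set at level $\Lambda_{\text{Salem}}>0$, and let $f:\mathbb{Z}_N^d\to\mathbb{C}$ be supported in $E\subset\mathbb{Z}_N^d$. Suppose $$|E|\cdot|S|^{3/4}<\frac12\,N^d\sqrt{\frac{1-\mathrm{dens}(S)}{\Lambda_{\text{Salem}}}},\qquad \mathrm{dens}(S)=N^{-d}|S|.$$ Then $f$ is uniquely determined by the values $\hat f(m)$, $m\notin S$, among signals with at most $|E|$ nonzero entries: if $g:\mathbb{Z}_N^d\to\mathbb{C}$ satisfies $|\{x:g(x)\ne0\}|\le|E|$ and $\hat g(m)=\hat f(m)$ for all $m\notin S$, then $g=f$.
   Context: $\chi(t)=e^{2\pi i t/N}$, $\hat f(m)=N^{-d}\sum_{x\in\mathbb{Z}_N^d}\chi(-x\cdot m)f(x)$. Sets are identified with indicator functions, so $\hat S(z)=N^{-d}\sum_{x\in S}\chi(-x\cdot z)$. A set $S\subset\mathbb{Z}_N^d$ is a Salem set at level $\Lambda_{\text{Salem}}$ if $|\hat S(z)|\le\Lambda_{\text{Salem}}N^{-d}|S|^{1/2}$ for all $z\ne0$. The set $S$ is the set of unobserved frequencies. *)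

(* Defs.v *)
From HB Require Import structures.
From mathcomp Require Import all_boot all_order all_algebra.
From mathcomp Require Import reals trigo exp.
From mathcomp Require Import complex.

Set Implicit Arguments.
Unset Strict Implicit.
Unset Printing Implicit Defensive.

Import Order.TTheory GRing.Theory Num.Theory.
Local Open Scope ring_scope.
Local Open Scope complex_scope.

(* Points of Z_N^d: functions 'I_d -> 'I_N (residues 0..N-1 of each coordinate). *)
Definition pt (N d : nat) := {ffun 'I_d -> 'I_N}.

(* x . m, computed on representatives in nat (chi only depends on it mod N). *)
Definition dotp (N d : nat) (x m : pt N d) : nat :=
  (\sum_(i < d) (nat_of_ord (x i)) * (nat_of_ord (m i)))%N.

Definition chi (R : realType) (N : nat) (t : R) : R[i] :=
  (cos (2 * pi * t / N%:R)) +i* (sin (2 * pi * t / N%:R)).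

Definition fhat (R : realType) (N d : nat) (f : pt N d -> R[i]) (m : pt N d) : R[i] :=
  (N%:R ^+ d)^-1 * \sum_(x : pt N d) chi N (- ((dotp x m)%:R : R)) * f x.

Definition indic (R : realType) (N d : nat) (S : {set pt N d}) : pt N d -> R[i] :=
  fun x => if x \in S then 1 else 0.

Definition salem (R : realType) (N d : nat) (S : {set pt N d}) (L : R) : Prop :=
  forall z : pt N d, (exists i, nat_of_ord (z i) != 0%N) ->
    `|fhat (indic R S) z| <= (L * (N%:R ^+ d)^-1 * Num.sqrt (#|S|%:R))%:C.

Definition dens (R : realType) (N d : nat) (S : {set pt N d}) : R :=
  (N%:R ^+ d)^-1 * #|S|%:R.

(* Main.v *)
Require Import Defs.
From HB Require Import structures.
From mathcomp Require Import all_boot all_order all_algebra.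
From mathcomp Require Import reals trigo exp.
From mathcomp Require Import complex.
From mathcomp Require Import ring lra.
Import Order.TTheory GRing.Theory Num.Theory.
Local Open Scope ring_scope.
Local Open Scope complex_scope.
Import ComplexField.Normc.
Section T.
Variable R : realType.
Variable N : nat.
Hypothesis hN : (0 < N)%N.
Lemma normE (x : R[i]) : `|x| = (normc x)%:C.
Proof. reflexivity. Qed.
Lemma mulE (a b c e : R) : (a +i* b) * (c +i* e) = (a*c - b*e) +i* (a*e + b*c).
Proof. reflexivity. Qed.

Lemma Nneq0 : (N%:R : R) != 0.
Proof. by rewrite pnatr_eq0 -lt0n. Qed.

Lemma chiD (a b : R) : chi N (a + b) = chi N a * chi N b.
Proof.
rewrite /chi mulE.
have -> : 2 * pi * (a + b) / N%:R = 2 * pi * a / N%:R + 2 * pi * b / N%:R.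
  by rewrite mulrDr mulrDl.
rewrite cosD sinD; congr (_ +i* _); ring.
Qed.

Lemma chi0 : chi N (0:R) = 1.
Proof. by rewrite /chi mulr0 mul0r cos0 sin0. Qed.

Lemma norm_chi (t : R) : `|chi N t| = 1.
Proof. by rewrite normE /chi /normc cos2Dsin2 sqrtr1. Qed.

Lemma chiP (t : R) : chi N (t + N%:R) = chi N t.
Proof.
rewrite /chi.
have -> : 2 * pi * (t + N%:R) / N%:R = 2 * pi * t / N%:R + pi *+ 2.
  rewrite mulrDr mulrDl; congr (_ + _).
  by rewrite -mulrA divff ?Nneq0 // mulr1 mulr2n mulrDl mul1r.
by rewrite cosD2pi sinD2pi.
Qed.

Lemma chiPk (t : R) (k : nat) : chi N (t + k%:R * N%:R) = chi N t.
Proof.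
elim: k => [|k IH]; first by rewrite mul0r addr0.
by rewrite mulrSr mulrDl mul1r addrA chiP IH.
Qed.

Lemma chiPkN (t : R) (k : nat) : chi N (t - k%:R * N%:R) = chi N t.
Proof. by rewrite -(chiPk (t - _) k) subrK. Qed.

Lemma chi_sum (I : finType) (F : I -> R) : chi N (\sum_i F i) = \prod_i chi N (F i).
Proof.
apply: (big_morph _ chiD chi0).
Qed.

Lemma chiX (c : R) (j : nat) : chi N (c * j%:R) = chi N c ^+ j.
Proof.
elim: j => [|j IH]; first by rewrite mulr0 chi0.
by rewrite mulrSr mulrDr mulr1 chiD IH exprSr.
Qed.
Lemma chi_neq1 (c : R) : 0 < `|c| < N%:R -> chi N c != 1.
Proof.
move=> /andP[c0 cN]; apply/eqP => /(congr1 (@complex.Re R)) /= hc.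
set th := pi * c / N%:R.
have e2 : 2 * pi * c / N%:R = th *+ 2 by rewrite /th mulr2n mulrDl !mul1r -!mulrA mulr2n mulrDl.
rewrite e2 cos_mulr2n in hc.
have hs : sin th ^+ 2 = 0 by rewrite sin2cos2; apply/eqP; rewrite subr_eq0; apply/eqP; lra.
have hs0 : sin `|th| = 0.
  move/eqP: hs; rewrite expf_eq0 /= => /eqP s0.
  case: (ger0P th) => _; first by [].
  by rewrite sinN s0 oppr0.
have hpos : 0 < `|th| < pi.
  rewrite /th normrM normrM (gtr0_norm (@pi_gt0 R)) normfV normr_nat.
  have N0 : (0 : R) < N%:R by rewrite ltr0n.
  apply/andP; split; first by rewrite !mulr_gt0 ?pi_gt0 ?invr_gt0.
  rewrite -mulrA; apply: (@lt_le_trans _ _ (pi * 1)); last by rewrite mulr1.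
  rewrite ltr_pM2l ?pi_gt0 // ltr_pdivrMr //; lra.
by have := sin_gt0_pi hpos; rewrite hs0 ltxx.
Qed.
Lemma sum1D (a b : nat) : (a < N)%N -> (b < N)%N ->
  \sum_(j < N) chi N ((a%:R - b%:R) * j%:R) = if a == b then (N%:R : R[i]) else 0.
Proof.
move=> ha hb; case: eqP => [->|/eqP ab].
  under eq_bigr do rewrite subrr mul0r chi0.
  by rewrite sumr_const card_ord.
under eq_bigr do rewrite chiX.
set w := chi N (a%:R - b%:R).
have wN : w ^+ N = 1.
  rewrite /w -chiX mulrBl chiD -[X in chi N X]add0r chiPk -[X in _ * chi N X]add0r.
  by rewrite chiPkN chi0 mulr1.
have w1 : w - 1 != 0.
  rewrite subr_eq0; apply: chi_neq1.
  have hA : (a%:R : R) < N%:R by rewrite ltr_nat.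
  have hB : (b%:R : R) < N%:R by rewrite ltr_nat.
  have hA0 : (0 : R) <= a%:R by [].
  have hB0 : (0 : R) <= b%:R by [].
  have hAB : (a%:R : R) != b%:R by rewrite eqr_nat.
  case: (ger0P (a%:R - b%:R : R)) => h.
    apply/andP; split; last by lra.
    by rewrite lt_def h andbT subr_eq0.
  by apply/andP; split; lra.
have := subrX1 w N; rewrite wN subrr => /esym/eqP; rewrite mulf_eq0 (negPf w1) /=.
by move/eqP.
Qed.
Lemma orth (d : nat) (x y : pt N d) :
  \sum_(m : pt N d) chi N ((dotp x m)%:R - (dotp y m)%:R) =
  if x == y then (N%:R : R[i]) ^+ d else 0.
Proof.
have e : forall m : pt N d, @chi R N ((dotp x m)%:R - (dotp y m)%:R) =
   \prod_(i < d) chi N (((x i : nat)%:R - (y i : nat)%:R) * (m i : nat)%:R).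
  move=> m; rewrite /dotp. rewrite !natr_sum -sumrB -chi_sum; congr (chi N _).
  by apply: eq_bigr => i _; rewrite !natrM mulrBl.
rewrite (eq_bigr _ (fun m _ => e m)).
rewrite -(bigA_distr_bigA (fun (i : 'I_d) (j : 'I_N) =>
   chi N (((x i : nat)%:R - (y i : nat)%:R) * (j : nat)%:R))).
under eq_bigr do rewrite sum1D ?ltn_ord //.
case: eqP => [->|/eqP xy].
  under eq_bigr do rewrite eqxx.
  by rewrite prodr_const card_ord.
have [i xyi] : exists i, x i != y i.
  apply/existsP; apply: contraR xy; rewrite negb_exists => /forallP H.
  by apply/eqP/ffunP => i; apply/eqP; have := H i; rewrite negbK.
rewrite (bigD1 i) //= ifF ?mul0r //.
by apply/negbTE; move: xyi; apply: contra => /eqP h; apply/eqP/val_inj.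
Qed.
Lemma nd_neq0 (d : nat) : (N%:R : R[i]) ^+ d != 0.
Proof. rewrite expf_eq0 pnatr_eq0 negb_and; apply/orP; right; by rewrite -lt0n. Qed.

Lemma inversion (d : nat) (h : pt N d -> R[i]) (x : pt N d) :
  h x = \sum_(m : pt N d) chi N ((dotp x m)%:R : R) * fhat h m.
Proof.
set n := (N%:R : R[i]) ^+ d.
rewrite (eq_bigr (fun m : pt N d => \sum_(y : pt N d) (n^-1 * h y) *
    chi N (((dotp x m)%:R : R) - (dotp y m)%:R))); last first.
  move=> m _; rewrite /fhat mulrA [_ * n^-1]mulrC -mulrA mulr_sumr.
  rewrite mulr_sumr. by apply: eq_bigr => y _; rewrite chiD; ring.
rewrite exchange_big /=.
under eq_bigr do rewrite -mulr_sumr orth.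
rewrite (bigD1 x) //= eqxx big1 ?addr0; last first.
  by move=> y /negPf; rewrite eq_sym => ->; rewrite mulr0.
by rewrite mulrAC mulVf ?mul1r // nd_neq0.
Qed.
Definition zdiff {d : nat} (y x0 : pt N d) : pt N d :=
  [ffun i => Ordinal (ltn_pmod (nat_of_ord (y i) + (N - nat_of_ord (x0 i))) hN)].

Lemma chi_zdiff (d : nat) (y x0 m : pt N d) :
  chi N (- ((dotp m (zdiff y x0))%:R : R)) = chi N ((dotp x0 m)%:R - (dotp y m)%:R).
Proof.
set A := dotp m (zdiff y x0); set B := dotp x0 m; set C := dotp y m.
have hmod : ((A + B) %% N = C %% N)%N.
  rewrite /A /B /C /dotp -big_split /=.
  rewrite -modn_summ -[in RHS]modn_summ; congr (_ %% N)%N.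
  apply: eq_bigr => i _; rewrite ffunE /=.
  rewrite -modnDml modnMmr modnDml.
  have -> : (m i * (y i + (N - x0 i)) + x0 i * m i = y i * m i + m i * N)%N.
    rewrite mulnDr -addnA [(x0 i * m i)%N]mulnC -mulnDr subnK ?(ltnW (ltn_ord _)) //.
    by rewrite mulnC.
  by rewrite addnC modnMDl.
have eA : (A + B = (A + B) %/ N * N + C %% N)%N by rewrite -hmod -divn_eq.
have eC : (C = C %/ N * N + C %% N)%N by rewrite -divn_eq.
have -> : ((B%:R - C%:R) : R) =
   - A%:R + ((A + B) %/ N)%:R * N%:R - (C %/ N)%:R * N%:R.
  have hAB : ((A%:R + B%:R) : R) = ((A + B) %/ N)%:R * N%:R + (C %% N)%:R.
    by rewrite -natrD -natrM -natrD -eA.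
  have hC : (C%:R : R) = (C %/ N)%:R * N%:R + (C %% N)%:R.
    by rewrite -natrM -natrD -eC.
  rewrite hC; lra.
by rewrite chiPkN chiPk.
Qed.

Lemma zdiff_neq0 (d : nat) (y x0 : pt N d) : y != x0 ->
  exists i, nat_of_ord (zdiff y x0 i) != 0%N.
Proof.
move=> yx.
have [i yxi] : exists i, y i != x0 i.
  apply/existsP; apply: contraR yx; rewrite negb_exists => /forallP H.
  by apply/eqP/ffunP => i; apply/eqP; have := H i; rewrite negbK.
exists i; rewrite ffunE /=.
have hy := ltn_ord (y i); have hx := ltn_ord (x0 i).
have yxn : (y i : nat) != x0 i by [].
case: (ltngtP (y i) (x0 i)) => hc.
- rewrite modn_small; last by rewrite -ltn_subRL; apply: ltn_sub2l => //; apply: leq_ltn_trans hy.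
  by rewrite addn_eq0 subn_eq0 negb_and -ltnNge hx orbT.
- have -> : ((y i : nat) + (N - x0 i) = (y i - x0 i) + N)%N.
    by rewrite addnBA ?(ltnW hx) // addnC -addnBA ?(ltnW hc) // addnC.
  rewrite modnDr modn_small; last by apply: leq_ltn_trans (leq_subr _ _) hy.
  by rewrite subn_eq0 -ltnNge.
- by move: yxn; rewrite hc eqxx.
Qed.

Lemma exists_max (T : finType) (F : T -> R) (t : T) : exists x0, forall y, F y <= F x0.
Proof.
case: (@arg_maxP _ _ T t xpredT F) => // x0 _ H; exists x0 => y; exact: H.
Qed.
Lemma normC_real (r : R) : `|r%:C| = `|r|%:C.
Proof. rewrite normE /normc /=. congr (_ %:C). rewrite -[in RHS]sqrtr_sqr. congr (Num.sqrt _). by rewrite -[RHS]addr0; congr (_ + _); exact: (mulr0 (0:R)). Qed.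

Lemma up_bound (d : nat) (S : {set pt N d}) (h : pt N d -> R[i])
  (hh : forall m, m \notin S -> fhat h m = 0) (x0 : pt N d)
  (hmax : forall y, `|h y| <= `|h x0|) (hx0 : h x0 != 0) :
  (N ^ d <= #|S| * #|[set y | h y != 0%R]|)%N.
Proof.
set a := #|[set y | h y != 0%R]|.
set n := (N%:R : R[i]) ^+ d.
have n0 : 0 < n by rewrite exprn_gt0 // ltr0n.
have sumA : \sum_y `|h y| <= a%:R * `|h x0|.
  rewrite (bigID (fun y => y \in [set y | h y != 0%R])) /= [X in _ + X]big1; last first.
    by move=> y; rewrite inE negbK => /eqP ->; rewrite normr0.
  rewrite addr0; apply: le_trans (ler_sum _ (fun y _ => hmax y)) _.
  by rewrite sumr_const mulr_natl.
have hhat : forall m, `|fhat h m| <= n^-1 * (a%:R * `|h x0|).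
  move=> m; rewrite /fhat normrM normfV (gtr0_norm n0) ler_pM2l ?invr_gt0 //.
  apply: le_trans (ler_norm_sum _ _ _) _; apply: le_trans sumA.
  by apply: ler_sum => y _; rewrite normrM norm_chi mul1r.
have : `|h x0| <= #|S|%:R * (n^-1 * (a%:R * `|h x0|)).
  rewrite {1}(inversion _ h x0); apply: le_trans (ler_norm_sum _ _ _) _.
  under eq_bigr do rewrite normrM norm_chi mul1r.
  rewrite (bigID (fun m => m \in S)) /= [X in _ + X]big1; last first.
    by move=> m /hh ->; rewrite normr0.
  rewrite addr0; apply: le_trans (ler_sum _ (fun m _ => hhat m)) _.
  by rewrite sumr_const [X in _ <= X]mulr_natl.
have M0 : 0 < `|h x0| by rewrite normr_gt0.
have -> : #|S|%:R * (n^-1 * (a%:R * `|h x0|)) = ((#|S| * a)%N%:R * `|h x0|) / n.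
  by rewrite natrM; ring.
rewrite ler_pdivlMr // mulrC ler_pM2r // /n -natrX ler_nat.
by [].
Qed.
Lemma sumA_bound (d : nat) (h : pt N d -> R[i]) (x0 : pt N d)
  (hmax : forall y, `|h y| <= `|h x0|) :
  \sum_y `|h y| <= #|[set y | h y != 0%R]|%:R * `|h x0|.
Proof.
rewrite (bigID (fun y => y \in [set y | h y != 0%R])) /= [X in _ + X]big1; last first.
  by move=> y; rewrite inE negbK => /eqP ->; rewrite normr0.
rewrite addr0; apply: le_trans (ler_sum _ (fun y _ => hmax y)) _.
by rewrite sumr_const mulr_natl.
Qed.

Lemma sb_bound (d : nat) (S : {set pt N d}) (L : R) (hL : 0 < L) (hSalem : salem S L)
  (h : pt N d -> R[i])
  (hh : forall m, m \notin S -> fhat h m = 0) (x0 : pt N d)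
  (hmax : forall y, `|h y| <= `|h x0|) :
  normc (h x0) * `|1 - dens R S| <=
  #|[set y | h y != 0%R]|%:R * normc (h x0) *
     (L * (N%:R ^+ d)^-1 * Num.sqrt (#|S|%:R)).
Proof.
set n := (N%:R : R[i]) ^+ d.
set c := (L * (N%:R ^+ d)^-1 * Num.sqrt (#|S|%:R)).
set K := fun y : pt N d => n^-1 * \sum_(m : pt N d) indic R S m *
    chi N (((dotp x0 m)%:R : R) - (dotp y m)%:R).
have hS : forall m, fhat h m = indic R S m * fhat h m.
  move=> m; rewrite /indic; case: ifP => hm; first by rewrite mul1r.
  by rewrite mul0r hh // hm.
have hK : h x0 = \sum_y h y * K y.
  rewrite {1}(inversion _ h x0).
  rewrite (eq_bigr (fun m : pt N d => \sum_(y : pt N d) h y * (n^-1 * (indic R S m *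
    chi N (((dotp x0 m)%:R : R) - (dotp y m)%:R))))); last first.
    move=> m _; rewrite hS /fhat !mulr_sumr.
    by apply: eq_bigr => y _; rewrite chiD; ring.
  rewrite exchange_big /=; apply: eq_bigr => y _.
  by rewrite /K -!mulr_sumr.
have hKx0 : K x0 = (dens R S)%:C.
  rewrite /K; under eq_bigr do rewrite subrr chi0 mulr1.
  rewrite /indic -big_mkcond sumr_const /dens rmorphM /= fmorphV rmorphXn /=.
  by rewrite !rmorph_nat mulr_natr.
have hKy : forall y, y != x0 -> `|K y| <= c%:C.
  move=> y yx; have -> : K y = fhat (indic R S) (zdiff y x0).
    rewrite /K /fhat; congr (_ * _); apply: eq_bigr => m _.
    by rewrite chi_zdiff mulrC.
  rewrite /c; apply: hSalem; exact: zdiff_neq0.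
have c0 : 0 <= c%:C.
  rewrite lecR /c mulr_ge0 ?sqrtr_ge0 // mulr_ge0 ?invr_ge0 ?exprn_ge0 //.
  exact: ltW.
have e1 : h x0 * (1 - (dens R S)%:C) = \sum_(y | y != x0) h y * K y.
  move: hK; rewrite (bigD1 x0) //= hKx0 => hK'.
  by rewrite mulrBr mulr1 {1}hK' addrAC subrr add0r.
have e2 : `|h x0 * (1 - (dens R S)%:C)| <=
    #|[set y | h y != 0%R]|%:R * `|h x0| * c%:C.
  rewrite e1; apply: le_trans (ler_norm_sum _ _ _) _.
  apply: (@le_trans _ _ (\sum_(y | y != x0) `|h y| * c%:C)).
    apply: ler_sum => y yx; rewrite normrM; apply: ler_wpM2l; [exact: normr_ge0 | exact: hKy].
  apply: (@le_trans _ _ (\sum_y `|h y| * c%:C)).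
    rewrite [X in _ <= X](bigD1 x0) //=; apply: ler_wpDl => //.
    exact: mulr_ge0.
  rewrite -mulr_suml; apply: ler_wpM2r => //; exact: sumA_bound.
move: e2; rewrite normrM -(rmorph1 (real_complex R)) -rmorphB normC_real.
rewrite !normE -[(#|_|%:R : R[i])](rmorph_nat (real_complex R)) -!rmorphM lecR.
by [].
Qed.
End T.
Lemma arith (R : realType) (e s a n q L P : R) : 0 < L -> 1 <= s ->
  P * P = s * Num.sqrt s -> 0 <= P -> 0 < n -> 0 <= e -> n <= s * a ->
  q <= a * (L * n^-1 * Num.sqrt s) -> a <= 2 * e ->
  e * P < 2^-1 * n * Num.sqrt (q / L) -> False.
Proof.
move=> L0 s1 hP P0 n0 e0 F1 F2 F3 hyp.
set rs := Num.sqrt s in hP F2.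
have rs0 : 0 < rs by rewrite sqrtr_gt0; lra.
have [e00|epos] : e = 0 \/ 0 < e by move: e0; rewrite le_eqVlt => /orP[/eqP->|->]; [left|right].
  by subst e; nra.
set t := n^-1 in F2.
have nt : n * t = 1 by rewrite /t divff // gt_eqF.
have t0 : 0 < t by rewrite /t invr_gt0.
set sq := Num.sqrt (q / L) in hyp.
have sq0 : 0 < sq.
  have : 0 <= e * P by exact: mulr_ge0.
  move=> h1; have h2 : 0 < 2^-1 * n * sq by lra.
  rewrite pmulr_rgt0 // in h2; rewrite pmulr_rgt0 //; lra.
have hq : 0 < q / L by rewrite -sqrtr_gt0.
have sqsq : sq * sq = q / L by rewrite -expr2 sqr_sqrtr // ltW.
have F2' : q / L <= a * t * rs.
  rewrite ler_pdivrMr //; move: F2; rewrite (mulrC L) -!mulrA (mulrC L) !mulrA //.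
have h3 : (e * P) * (e * P) < (2^-1 * n * sq) * (2^-1 * n * sq).
  by apply: ltr_pM => //; apply: mulr_ge0.
have h4 : e * e * (s * rs) < 2^-1 * 2^-1 * n * n * (q / L).
  by rewrite -hP -sqsq; move: h3; rewrite !mulrA; congr (_ < _); ring.
have h5 : e * e * (s * rs) < 2^-1 * n * e * rs.
  apply: (lt_le_trans h4).
  have : 2^-1 * 2^-1 * n * n * (q / L) <= 2^-1 * 2^-1 * n * n * (a * t * rs).
    by apply: ler_wpM2l => //; rewrite !mulr_ge0 // ?invr_ge0 ?ltW.
  move=> h6; apply: (le_trans h6).
  have -> : 2^-1 * 2^-1 * n * n * (a * t * rs) = 2^-1 * 2^-1 * n * a * rs * (n * t) by ring.
  rewrite nt mulr1 -subr_ge0.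
  have -> : 2^-1 * n * e * rs - 2^-1 * 2^-1 * n * a * rs = 2^-1 * 2^-1 * (n * rs * (2 * e - a)) by field.
  apply: mulr_ge0; first by rewrite mulr_ge0 // invr_ge0.
  apply: mulr_ge0; first by rewrite mulr_ge0 // ltW.
  lra.
have h7 : e * s < 2^-1 * n.
  have h8 : (e * rs) * (e * s) < (e * rs) * (2^-1 * n).
    by move: h5; congr (_ < _); ring.
  by rewrite ltr_pM2l ?mulr_gt0 // in h8.
nra.
Qed.
Lemma pw (R : realType) (s : R) : 0 < s -> s `^ (3%:R/4%:R) * s `^ (3%:R/4%:R) = s * Num.sqrt s.
Proof.
move=> s0.
rewrite -powRD; last by apply/implyP => _; rewrite gt_eqF.
have -> : 3%:R/4%:R + 3%:R/4%:R = 1 + 2^-1 :> R by field.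
rewrite powRD; last by apply/implyP => _; rewrite gt_eqF.
by rewrite powRr1 ?ltW // powR12_sqrt ?ltW.
Qed.

Close Scope complex_scope.
Theorem theorem4 (R : realType) (N d : nat) (hN : (2 <= N)%N) (hd : (1 <= d)%N)
  (S : {set pt N d}) (L : R) (hS0 : S != set0) (hL : 0 < L) (hSalem : salem S L)
  (E : {set pt N d}) (f : pt N d -> R[i])
  (hsupp : forall x, x \notin E -> f x = 0)
  (hsize : #|E|%:R * (#|S|%:R `^ (3%:R / 4%:R)) <
           2^-1 * N%:R ^+ d * Num.sqrt ((1 - dens R S) / L)) :
  forall g : pt N d -> R[i],
    (#|[set x | g x != 0%R]| <= #|E|)%N ->
    (forall m, m \notin S -> fhat g m = fhat f m) ->
    forall x, g x = f x.
Proof.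
move=> g hg hfg x; apply/eqP; apply: contraT => hx.
have hN0 : (0 < N)%N by apply: leq_trans hN.
set h := fun y => g y - f y.
have hh : forall m, m \notin S -> fhat h m = 0.
  move=> m hm.
  have -> : fhat h m = fhat g m - fhat f m.
    rewrite /fhat -mulrBr -sumrB; congr (_ * _); apply: eq_bigr => y _.
    by rewrite mulrBr.
  by rewrite hfg // subrr.
have [x0 hmax0] := @exists_max R _ (fun y => normc (h y)) x.
have hmax : forall y, `|h y| <= `|h x0| by move=> y; rewrite !normE lecR hmax0.
have hx0 : h x0 != 0.
  apply: contraNneq hx => e0.
  have := hmax x; rewrite e0 normr0 normr_le0 /h subr_eq0 => ->; by [].
set A := [set y | h y != 0%R].
have hA : (#|A| <= 2 * #|E|)%N.
  apply: (@leq_trans #|[set y | g y != 0%R] :|: E|).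
    apply: subset_leq_card; apply/subsetP => y; rewrite !inE /h.
    case: (boolP (y \in E)) => yE; first by rewrite orbT.
    by move=> H; apply/orP; left; move: H; rewrite hsupp // subr0.
  by rewrite cardsU; apply: leq_trans (leq_subr _ _) _; rewrite mul2n -addnn leq_add2r.
have UP := @up_bound R N hN0 d S h hh x0 hmax hx0.
have SB := @sb_bound R N hN0 d S L hL hSalem h hh x0 hmax.
have M0 : 0 < normc (h x0).
  by move: (normr_gt0 (h x0)); rewrite hx0 normE ltcR.
have s1 : (1 : R) <= #|S|%:R by rewrite ler1n card_gt0.
exfalso; apply: (@arith R #|E|%:R #|S|%:R #|A|%:R (N%:R ^+ d) (1 - dens R S) L
   (#|S|%:R `^ (3%:R / 4%:R))) => //.
- by apply: pw; lra.
- exact: powR_ge0.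
- by rewrite exprn_gt0 // ltr0n.
- by rewrite -natrX -natrM ler_nat.
- apply: (le_trans (ler_norm _)).
  by move: SB; rewrite [X in _ <= X]mulrAC [X in _ <= X]mulrC ler_pM2l.
- by rewrite -natrM ler_nat.
Qed.
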